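(* Let $G_0$ be a finite group with an involutive automorphism $g\mapsto\tilde g$, and $\omega$ a normalized $U(1)$-valued 2-cocycle on $G_0$ with $\omega(g,h)\omega(\tilde g,\tilde h)=1$ for all $g,h$. Let $\mathcal D^\alpha$ be an irreducible projective unitary representation of $G_0$ with cocycle $\omega$, of dimension $d_\alpha$ and character $\chi_\alpha$, and define $\iota_\alpha=\frac1{|G_0|}\sum_{g\in G_0}\omega(\tilde g,g)\chi_\alpha(\tilde gg)$. Then $g\mapsto\mathcal D^{\alpha^\star}(g):=\overline{\mathcal D^\alpha(\tilde g)}$ is again an irreducible projective unitary representation with cocycle $\omega$, $\iota_\alpha\in\{0,1,-1\}$, and: (1) $\iota_\alpha=0$ if and only if $\alpha^\star$ is inequivalent to $\alpha$; (2) $\iota_\alpha=1$ if and only if there is a unitary change of basis after which $\overline{\mathcal D^\alpha(\tilde g)}=\mathcal D^\alpha(g)$ for all $g\in G_0$; (3) $\iota_\alpha=-1$ if and only if $d_\alpha$ is even and there is a unitary change of basis after which $\overline{\mathcal D^\alpha(\tilde g)}=Y\mathcal D^\alpha(g)Y$ for all $g$, where $Y=\sigma_y\otimes\mathbb{1}_{d_\alpha/2}$. *)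

(* Defs.v *)
From HB Require Import structures.
From mathcomp Require Import all_boot all_order all_algebra all_fingroup all_field.
Set Implicit Arguments.
Unset Strict Implicit.
Unset Printing Implicit Defensive.
Import Order.TTheory GRing.Theory Num.Theory.
Local Open Scope ring_scope.

Definition ctr_mx (m n : nat) (A : 'M[algC]_(m, n)) : 'M[algC]_(n, m) :=
  (map_mx (fun x : algC => x^*) A)^T.

Definition entry_conj_mx (m n : nat) (A : 'M[algC]_(m, n)) : 'M[algC]_(m, n) :=
  map_mx (fun x : algC => x^*) A.

Definition unitaryP_mx (d : nat) (U : 'M[algC]_d) : Prop :=
  U *m ctr_mx U = 1%:M.

Definition normalized_U1_cocycle (gT : finGroupType) (w : gT -> gT -> algC) : Prop :=
  [/\ forall g h, `|w g h| = 1,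
      forall g h k, w g h * w (g * h)%g k = w g (h * k)%g * w h k,
      forall g, w 1%g g = 1 &
      forall g, w g 1%g = 1].

Definition involutive_aut (gT : finGroupType) (t : gT -> gT) : Prop :=
  (forall g h, t (g * h)%g = (t g * t h)%g) /\ (forall g, t (t g) = g).

Definition proj_unitary_rep (gT : finGroupType) (w : gT -> gT -> algC)
    (d : nat) (D : gT -> 'M[algC]_d) : Prop :=
  (forall g h, D g *m D h = w g h *: D (g * h)%g) /\
  (forall g, unitaryP_mx (D g)).

(* A subspace is the row space of U (vectors written as rows);
   v |-> D g v on columns corresponds to u |-> u (D g)^T on rows. *)
Definition irreducible_rep (gT : finGroupType) (d : nat) (D : gT -> 'M[algC]_d) : Prop :=
  (0 < d)%N /\
  forall U : 'M[algC]_d, (forall g, (U *m (D g)^T <= U)%MS) ->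
    U = 0 \/ row_full U.

Definition irr_proj_unitary_rep (gT : finGroupType) (w : gT -> gT -> algC)
    (d : nat) (D : gT -> 'M[algC]_d) : Prop :=
  proj_unitary_rep w D /\ irreducible_rep D.

Definition equiv_rep (gT : finGroupType) (d : nat) (D1 D2 : gT -> 'M[algC]_d) : Prop :=
  exists P : 'M[algC]_d, P \in unitmx /\ forall g, D2 g = P *m D1 g *m invmx P.

Definition proj_character (gT : finGroupType) (d : nat) (D : gT -> 'M[algC]_d) (g : gT) : algC :=
  \tr (D g).

Definition iota_ind (gT : finGroupType) (t : gT -> gT) (w : gT -> gT -> algC)
    (d : nat) (D : gT -> 'M[algC]_d) : algC :=
  (#|gT|%:R)^-1 * \sum_(g : gT) w (t g) g * proj_character D (t g * g)%g.

Definition star_rep (gT : finGroupType) (t : gT -> gT) (d : nat)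
    (D : gT -> 'M[algC]_d) : gT -> 'M[algC]_d :=
  fun g => entry_conj_mx (D (t g)).

Definition change_basis (gT : finGroupType) (d : nat) (U : 'M[algC]_d)
    (D : gT -> 'M[algC]_d) : gT -> 'M[algC]_d :=
  fun g => U *m D g *m ctr_mx U.

(* Y = sigma_y (x) 1_{d/2}, i.e. the block matrix [[0, -i 1],[i 1, 0]]
   (meaningful for d even) *)
Definition Ymx (d : nat) : 'M[algC]_d :=
  \matrix_(i < d, j < d)
     (if (j : nat) == (i + d./2)%N then - 'i
      else if (i : nat) == (j + d./2)%N then 'i else 0).

(* Main.v *)
Set Warnings "-all".
Require Import Defs.
From HB Require Import structures.
From mathcomp Require Import all_boot all_order all_algebra all_fingroup all_field.
From mathcomp Require Import spectral.
From Stdlib Require Classical_Prop.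
Set Implicit Arguments.
Unset Strict Implicit.
Unset Printing Implicit Defensive.
Import Order.TTheory GRing.Theory Num.Theory Num.Def.
Local Open Scope ring_scope.

Notation cj := entry_conj_mx.
Notation ctr := ctr_mx.

Lemma cjE m n (A : 'M[algC]_(m, n)) : cj A = map_mx conjC A. Proof. by []. Qed.
Lemma ctrE m n (A : 'M[algC]_(m, n)) : ctr A = (cj A)^T. Proof. by []. Qed.
Section Basic.
Variables m n p : nat.

Lemma cjM (A : 'M[algC]_(m, n)) (B : 'M[algC]_(n, p)) : cj (A *m B) = cj A *m cj B.
Proof. by rewrite !cjE map_mxM. Qed.
Lemma cjK (A : 'M[algC]_(m, n)) : cj (cj A) = A.
Proof. by apply/matrixP=> i j; rewrite !mxE conjCK. Qed.
Lemma cjZ a (A : 'M[algC]_(m, n)) : cj (a *: A) = a^* *: cj A.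
Proof. by rewrite !cjE map_mxZ. Qed.
Lemma cjD (A B : 'M[algC]_(m, n)) : cj (A + B) = cj A + cj B.
Proof. by rewrite !cjE map_mxD. Qed.
Lemma cjN (A : 'M[algC]_(m, n)) : cj (- A) = - cj A.
Proof. by rewrite !cjE map_mxN. Qed.
Lemma cj0 : cj (0 : 'M[algC]_(m, n)) = 0.
Proof. by rewrite cjE map_mx0. Qed.
Lemma cjtr (A : 'M[algC]_(m, n)) : cj A^T = (cj A)^T.
Proof. by rewrite cjE map_trmx. Qed.
Lemma ctrM (A : 'M[algC]_(m, n)) (B : 'M[algC]_(n, p)) : ctr (A *m B) = ctr B *m ctr A.
Proof. by rewrite !ctrE cjM trmx_mul. Qed.
Lemma ctrK (A : 'M[algC]_(m, n)) : ctr (ctr A) = A.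
Proof. by rewrite !ctrE cjtr cjK trmxK. Qed.
Lemma ctrZ a (A : 'M[algC]_(m, n)) : ctr (a *: A) = a^* *: ctr A.
Proof. by rewrite !ctrE cjZ linearZ. Qed.
Lemma ctrD (A B : 'M[algC]_(m, n)) : ctr (A + B) = ctr A + ctr B.
Proof. by rewrite !ctrE cjD linearD. Qed.
Lemma ctr0 : ctr (0 : 'M[algC]_(m, n)) = 0.
Proof. by rewrite ctrE cj0 trmx0. Qed.
Lemma cjctr (A : 'M[algC]_(m, n)) : cj (ctr A) = A^T.
Proof. by rewrite ctrE cjtr cjK. Qed.
Lemma ctrcj (A : 'M[algC]_(m, n)) : ctr (cj A) = A^T.
Proof. by rewrite ctrE cjK. Qed.
Lemma ctr_col (A : 'M[algC]_(m, p)) (B : 'M[algC]_(n, p)) :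
  ctr (col_mx A B) = row_mx (ctr A) (ctr B).
Proof. by rewrite !ctrE cjE map_col_mx tr_col_mx. Qed.
Lemma cj_col (A : 'M[algC]_(m, p)) (B : 'M[algC]_(n, p)) :
  cj (col_mx A B) = col_mx (cj A) (cj B).
Proof. by rewrite !cjE map_col_mx. Qed.
End Basic.

Lemma cj1 n : cj (1%:M : 'M[algC]_n) = 1%:M.
Proof. by rewrite cjE map_mx1. Qed.
Lemma ctr1 n : ctr (1%:M : 'M[algC]_n) = 1%:M.
Proof. by rewrite ctrE cj1 trmx1. Qed.
Lemma cj_scalar n a : cj (a%:M : 'M[algC]_n) = (a^*)%:M.
Proof. by rewrite cjE map_scalar_mx. Qed.
Lemma ctr_scalar n a : ctr (a%:M : 'M[algC]_n) = (a^*)%:M.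
Proof. by rewrite ctrE cj_scalar tr_scalar_mx. Qed.

Lemma unitary_sym n (U : 'M[algC]_n) : unitaryP_mx U -> ctr U *m U = 1%:M.
Proof. by move=> /mulmx1C. Qed.
Lemma unitary_unit n (U : 'M[algC]_n) : unitaryP_mx U -> U \in unitmx.
Proof. by move=> /mulmx1_unit []. Qed.
Lemma unitary_inv n (U : 'M[algC]_n) : unitaryP_mx U -> invmx U = ctr U.
Proof.
move=> hU; have uU := unitary_unit hU.
by rewrite -[invmx U]mulmx1 -hU mulmxA mulVmx // mul1mx.
Qed.
Lemma unitary_ctr n (U : 'M[algC]_n) : unitaryP_mx U -> unitaryP_mx (ctr U).
Proof. by move=> hU; rewrite /unitaryP_mx ctrK unitary_sym. Qed.
Lemma unitary_cj n (U : 'M[algC]_n) : unitaryP_mx U -> unitaryP_mx (cj U).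
Proof. by move=> hU; rewrite /unitaryP_mx ctrcj -(cjK U^T) cjtr -ctrE -cjM hU cj1. Qed.
Lemma unitary_tr n (U : 'M[algC]_n) : unitaryP_mx U -> unitaryP_mx U^T.
Proof. by move=> hU; rewrite /unitaryP_mx ctrE cjtr trmxK -[cj U]trmxK -ctrE -trmx_mul unitary_sym // trmx1. Qed.
Lemma unitary_mul n (U V : 'M[algC]_n) : unitaryP_mx U -> unitaryP_mx V -> unitaryP_mx (U *m V).
Proof.
move=> hU hV; rewrite /unitaryP_mx ctrM mulmxA -(mulmxA U) hV mulmx1 //.
Qed.

Section Schur.
Variables (gT : finGroupType) (d : nat) (D : gT -> 'M[algC]_d).
Hypothesis irrD : irreducible_rep D.

Lemma intertw (S : gT -> 'M[algC]_d) (T : 'M[algC]_d) :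
  (forall h, S h *m T = T *m D h) -> T = 0 \/ T \in unitmx.
Proof.
move=> hT; have [_ irr] := irrD.
have inv : forall g, (kermx T^T *m (D g)^T <= kermx T^T)%MS.
  move=> g; apply/sub_kermxP.
  by rewrite -mulmxA -trmx_mul -hT trmx_mul mulmxA mulmx_ker mul0mx.
case: (irr _ inv) => [/eqP|].
  by rewrite kermx_eq0 row_free_unit unitmx_tr; right.
rewrite row_full_unit => uK; left.
have := mulmx_ker T^T; move/(congr1 (mulmx (invmx (kermx T^T)))).
rewrite mulmxA mulVmx // mul1mx mulmx0 => /eqP; rewrite trmx_eq0 => /eqP //.
Qed.

Lemma schur_scalar (M : 'M[algC]_d) :
  (forall h, M *m D h = D h *m M) -> exists a, M = a%:M.
Proof.
move=> hM; have [d0 _] := irrD.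
have [a /eigenvalueP [v hv v0]] := eigenvalue_closed M d0.
exists a.
have : (M - a%:M) = 0 \/ (M - a%:M) \in unitmx.
  apply: (intertw (S := D)) => h.
  by rewrite mulmxBl mulmxBr hM scalar_mxC.
case=> [/eqP|]; first by rewrite subr_eq0 => /eqP.
move=> uN; exfalso; move/negP: v0; apply; apply/eqP.
have : v *m (M - a%:M) = 0 by rewrite mulmxBr hv mul_mx_scalar subrr.
move/(congr1 (mulmx^~ (invmx (M - a%:M)))).
by rewrite -mulmxA mulmxV // mulmx1 mul0mx.
Qed.
End Schur.

Section Orth.
Variables (gT : finGroupType) (w : gT -> gT -> algC) (d : nat).

Definition Tsum (A B : gT -> 'M[algC]_d) (X : 'M[algC]_d) :=
  \sum_(g : gT) A g *m X *m ctr (B g).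

Lemma Tsum_intertw (A B : gT -> 'M[algC]_d) :
  (forall g h, A g *m A h = w g h *: A (g * h)%g) -> proj_unitary_rep w B ->
  forall X h, A h *m Tsum A B X = Tsum A B X *m B h.
Proof.
move=> hA [hBm hBu] X h.
have key g : ctr (B (h * g)%g) *m B h = w h g *: ctr (B g).
  have e := congr1 (fun M => ctr (B (h * g)%g) *m M *m ctr (B g)) (hBm h g).
  move: e => /=; rewrite -!mulmxA (hBu g) mulmx1 -scalemxAl -scalemxAr => ->.
  by rewrite mulmxA unitary_sym // mul1mx.
rewrite /Tsum mulmx_sumr mulmx_suml [in RHS](reindex_inj (mulgI h)) /=.
apply: eq_bigr => g _.
by rewrite !mulmxA hA -!mulmxA key -scalemxAl -!scalemxAr scalemxAl.
Qed.

Lemma orth_self (D : gT -> 'M[algC]_d) : irr_proj_unitary_rep w D ->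
  forall X, Tsum D D X = ((#|gT|%:R / d%:R) * \tr X)%:M.
Proof.
move=> [[hDm hDu] irrD] X.
have [a ha] := schur_scalar irrD (fun h => esym (Tsum_intertw hDm (conj hDm hDu) X h)).
rewrite ha; congr (_%:M).
have [d0 _] := irrD.
have dn0 : (d%:R : algC) != 0 by rewrite pnatr_eq0 -lt0n.
have : \tr (Tsum D D X) = #|gT|%:R * \tr X.
  rewrite /Tsum raddf_sum /= (eq_bigr (fun _ => \tr X)).
    by rewrite sumr_const mulr_natl.
  by move=> g _; rewrite mxtrace_mulC mulmxA unitary_sym // mul1mx.
rewrite ha mxtrace_scalar => e.
apply: (mulIf dn0); rewrite mulr_natr e.
by rewrite mulrAC divfK.
Qed.
End Orth.

Lemma entry_delta n (A C : 'M[algC]_n) (i j a b : 'I_n) :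
  (A *m delta_mx j i *m C) a b = A a j * C i b.
Proof.
rewrite -(mul_delta_mx (0 : 'I_1)) mulmxA -colE -mulmxA -rowE.
by rewrite mxE big_ord1 !mxE.
Qed.

Lemma tr_delta n (R : 'M[algC]_n) (i j : 'I_n) : \tr (R *m delta_mx j i) = R i j.
Proof.
rewrite -(mul_delta_mx (0 : 'I_1)) mulmxA -colE mxtrace_mulC -rowE.
by rewrite /mxtrace big_ord1 !mxE.
Qed.

Section TrSum.
Variables (gT : finGroupType) (d : nat).
Lemma tr_sum (A B : gT -> 'M[algC]_d) (R Q : 'M[algC]_d) :
  (forall X, Tsum A B X = \tr (R *m X) *: Q) ->
  \sum_(g : gT) \tr (A g *m cj (B g)) = \sum_i \sum_j R i j * Q i j.
Proof.
move=> hT.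
have e i j : \sum_(g : gT) A g i j * (B g j i)^* = R i j * Q i j.
  have := congr1 (fun M : 'M[algC]_d => M i j) (hT (delta_mx j i)).
  rewrite /Tsum summxE /= mxE tr_delta => <-.
  by apply: eq_bigr => g _; rewrite entry_delta !mxE.
rewrite (eq_bigr (fun g => \sum_i \sum_j A g i j * (B g j i)^*)).
  rewrite exchange_big; apply: eq_bigr => i _.
  rewrite exchange_big; apply: eq_bigr => j _; exact: e.
move=> g _; rewrite /mxtrace; apply: eq_bigr => i _.
by rewrite mxE; apply: eq_bigr => j _; rewrite !mxE.
Qed.
End TrSum.


Section Vec.
Variable n : nat.

Lemma dot_ge0 (v : 'rV[algC]_n) : 0 <= (v *m ctr v) 0 0.
Proof. by rewrite mxE; apply: sumr_ge0 => k _; rewrite !mxE mul_conjC_ge0. Qed.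

Lemma dot_eq0 (v : 'rV[algC]_n) : ((v *m ctr v) 0 0 == 0) = (v == 0).
Proof.
apply/idP/idP; last by move/eqP->; rewrite mul0mx mxE.
rewrite mxE psumr_eq0; last by move=> k _; rewrite !mxE mul_conjC_ge0.
move/allP => h; apply/eqP/rowP => k; rewrite !mxE.
have := h k (mem_index_enum _); rewrite /= !mxE mul_conjC_eq0.
by move/eqP.
Qed.

Lemma normalize (v : 'rV[algC]_n) : v != 0 ->
  exists s : algC, [/\ s != 0, (s^-1)^* = s^-1 & (s^-1 *: v) *m ctr (s^-1 *: v) = 1%:M].
Proof.
move=> v0; set a := (v *m ctr v) 0 0.
have a0 : a != 0 by rewrite /a dot_eq0.
have age : 0 <= a by apply: dot_ge0.
exists (sqrtC a); split.
- by rewrite sqrtC_eq0.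
- by apply: conj_Creal; apply: ger0_real; rewrite invr_ge0 sqrtC_ge0.
rewrite ctrZ (conj_Creal (ger0_real _)); last by rewrite invr_ge0 sqrtC_ge0.
rewrite -scalemxAl -scalemxAr scalerA -invfM -expr2 sqrtCK.
by rewrite [v *m _]mx11_scalar -/a scale_scalar_mx mulVf.
Qed.

Lemma ker_vec k (A : 'M[algC]_(n, k)) : (k < n)%N -> exists v : 'rV_n, v != 0 /\ v *m A = 0.
Proof.
move=> kn.
have rK : (0 < \rank (kermx A))%N.
  rewrite mxrank_ker subn_gt0; apply: leq_ltn_trans kn; exact: rank_leq_col.
have : kermx A != 0 by apply: contraTneq rK => ->; rewrite mxrank0.
case: (boolP [exists i, row i (kermx A) != 0]).
  move/existsP=> [i hi] _; exists (row i (kermx A)); split => //.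
  by rewrite -row_mul mulmx_ker row0.
rewrite negb_exists => /forallP h /eqP []; apply/row_matrixP => i.
by have := h i; rewrite negbK row0 => /eqP.
Qed.

End Vec.

Lemma mx0row_eq n (A B : 'M[algC]_(0, n)) : A = B.
Proof. by apply/matrixP => -[]. Qed.

Lemma two_i_neq0 : ('i - ('i : algC)^*) != 0.
Proof. by rewrite conjCi opprK -mulr2n mulrn_eq0 neq0Ci. Qed.

Section Takagi.
Variables (n : nat) (P : 'M[algC]_n).
Hypotheses (uP : unitaryP_mx P) (hP : P *m cj P = 1%:M).

Lemma cPP : cj P *m P = 1%:M. Proof. exact: mulmx1C. Qed.

Lemma JJ k (x : 'M[algC]_(k, n)) : cj (cj x *m P) *m P = x.
Proof. by rewrite cjM cjK -mulmxA cPP mulmx1. Qed.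

Lemma Jorth k (x : 'rV[algC]_n) (E : 'M[algC]_(k, n)) : cj E *m P = E ->
  x *m ctr E = 0 -> (cj x *m P) *m ctr E = 0.
Proof.
move=> hE hx; rewrite -hE ctrM ctrcj mulmxA -(mulmxA _ P) uP mulmx1.
by rewrite -cjctr -cjM hx cj0.
Qed.

Lemma tak_step k (E : 'M[algC]_(k, n)) : (k < n)%N ->
  E *m ctr E = 1%:M -> cj E *m P = E ->
  exists E' : 'M[algC]_(1 + k, n), E' *m ctr E' = 1%:M /\ cj E' *m P = E'.
Proof.
move=> kn hE1 hE2.
have [v0 [v00 hv0]] := ker_vec (ctr E) kn.
have fix_u (u : 'rV_n) : cj (u + cj u *m P) *m P = u + cj u *m P.
  by rewrite cjD mulmxDl JJ addrC.
have orth_u (u : 'rV_n) : u *m ctr E = 0 -> (u + cj u *m P) *m ctr E = 0.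
  by move=> hu; rewrite mulmxDl hu (Jorth hE2 hu) addr0.
have [y [y0 yfix yorth]] : exists y : 'rV_n, [/\ y != 0, cj y *m P = y & y *m ctr E = 0].
  case: (eqVneq (v0 + cj v0 *m P) 0) => h1; last first.
    by exists (v0 + cj v0 *m P); split; [exact: h1 | exact: fix_u | exact: orth_u hv0].
  exists ('i *: v0 + cj ('i *: v0) *m P); split.
  - rewrite cjZ -scalemxAl.
    have -> : cj v0 *m P = - v0 by apply/eqP; rewrite -addr_eq0 addrC h1.
    by rewrite scalerN -scaleNr -scalerDl scaler_eq0 negb_or two_i_neq0.
  - exact: fix_u.
  - by apply: orth_u; rewrite -scalemxAl hv0 scaler0.
have [s [s0 sc hs]] := normalize y0.
exists (col_mx (s^-1 *: y) E); split.
  rewrite ctr_col mul_col_row hs hE1 -scalemxAl yorth scaler0.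
  by rewrite -[E]ctrK -ctrM -scalemxAl yorth scaler0 ctr0 -scalar_mx_block.
by rewrite cj_col mul_col_mx cjZ sc -scalemxAl yfix hE2.
Qed.

Lemma tak_ind k : (k <= n)%N ->
  exists E : 'M[algC]_(k, n), E *m ctr E = 1%:M /\ cj E *m P = E.
Proof.
elim: k => [|k IH] kn.
  by exists 0; split; apply: mx0row_eq.
have [E [h1 h2]] := IH (ltnW kn).
exact: tak_step kn h1 h2.
Qed.

Lemma takagi : exists U : 'M[algC]_n, unitaryP_mx U /\ cj U *m P = U.
Proof. exact: tak_ind (leqnn n). Qed.
End Takagi.

Section Skew.
Variables (m : nat) (P : 'M[algC]_(m + m)).
Hypotheses (uP : unitaryP_mx P) (hP : P *m cj P = (-1)%:M).
Local Notation n := (m + m).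

Lemma cPPn : cj P *m P = (-1)%:M.
Proof.
have := congr1 (fun X : 'M[algC]_n => cj X) hP.
by rewrite /= cjM cjK cj_scalar rmorphN1.
Qed.

Lemma cjP_eq : cj P = - ctr P.
Proof.
rewrite -[cj P]mul1mx -(unitary_sym uP) -mulmxA hP mul_mx_scalar.
by rewrite scaleN1r.
Qed.

Lemma skew k l (A : 'M[algC]_(k, n)) (B : 'M[algC]_(l, n)) :
  A *m ctr (cj B *m P) = - (B *m ctr (cj A *m P))^T.
Proof.
rewrite !ctrM !ctrcj !trmx_mul trmxK.
have -> : (ctr P)^T = - ctr P by rewrite {1}ctrE trmxK cjP_eq.
by rewrite mulmxN mulNmx opprK mulmxA.
Qed.

Lemma self_orth (e : 'rV[algC]_n) : e *m ctr (cj e *m P) = 0.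
Proof.
set M := e *m _.
have h : M = - M.
  rewrite {1}/M skew -/M.
  by rewrite [M in M^T]mx11_scalar tr_scalar_mx -mx11_scalar.
have : M *+ 2 = 0 by rewrite mulr2n {1}h addNr.
by move/eqP; rewrite -scaler_nat scaler_eq0 pnatr_eq0 /= => /eqP.
Qed.

Lemma skew_step k (E : 'M[algC]_(k, n)) : (k < m)%N ->
  E *m ctr E = 1%:M -> E *m ctr (cj E *m P) = 0 ->
  exists E' : 'M[algC]_(1 + k, n), E' *m ctr E' = 1%:M /\ E' *m ctr (cj E' *m P) = 0.
Proof.
move=> km hE1 hE2.
have kk : (k + k < n)%N.
  apply: (@leq_ltn_trans (k + m)); first by rewrite leq_add2l ltnW.
  by rewrite ltn_add2r.
have [v0 [v00]] := ker_vec (ctr (col_mx E (cj E *m P))) kk.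
rewrite ctr_col mul_mx_row => /eqP; rewrite row_mx_eq0 => /andP [/eqP o1 /eqP o2].
have [s [s0 sc hs]] := normalize v00.
set e := s^-1 *: v0.
have eo1 : e *m ctr E = 0 by rewrite /e -scalemxAl o1 scaler0.
have eo2 : e *m ctr (cj E *m P) = 0 by rewrite /e -scalemxAl o2 scaler0.
exists (col_mx e E); split.
  rewrite ctr_col mul_col_row hs hE1 eo1.
  by rewrite -[E]ctrK -ctrM eo1 ctr0 -scalar_mx_block.
rewrite cj_col (mul_col_mx (cj e) (cj E) P) ctr_col mul_col_row self_orth eo2 hE2 skew eo2.
by rewrite trmx0 oppr0 block_mx0.
Qed.

Lemma skew_ind k : (k <= m)%N ->
  exists E : 'M[algC]_(k, n), E *m ctr E = 1%:M /\ E *m ctr (cj E *m P) = 0.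
Proof.
elim: k => [|k IH] km.
  by exists 0; split; apply/matrixP => -[].
have [E [h1 h2]] := IH (ltnW km).
exact: skew_step km h1 h2.
Qed.
End Skew.

From mathcomp Require Import zify.

Lemma Ymx_block m : Ymx (m + m) = block_mx 0 ((- 'i)%:M) ('i%:M) 0 :> 'M[algC]_(m + m).
Proof.
have h2 : (m + m)./2 = m by rewrite addnn doubleK.
apply/matrixP => i j; rewrite -(splitK i) -(splitK j).
case: (split i) => a; case: (split j) => b /=.
- rewrite block_mxEul !mxE h2 /=.
  case: eqP => [h|_]; first by have := ltn_ord b; lia.
  case: eqP => [h|_] //; by have := ltn_ord a; lia.
- rewrite block_mxEur !mxE h2 /=.
  case: eqP => [h|h].
    have -> : a = b by apply: val_inj => /=; lia.
    by rewrite eqxx.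
  case: eqP => [h'|_]; first by have := ltn_ord a; lia.
  case: eqP => [h''|//]; by exfalso; apply: h; rewrite h''; lia.
- rewrite block_mxEdl !mxE h2 /=.
  case: eqP => [h|_]; first by have := ltn_ord b; lia.
  case: eqP => [h|h].
    have -> : a = b by apply: val_inj => /=; lia.
    by rewrite eqxx.
  case: eqP => [h''|//]; by exfalso; apply: h; rewrite h''; lia.
- rewrite block_mxEdr !mxE h2 /=.
  case: eqP => [h|_]; first by have := ltn_ord b; lia.
  case: eqP => [h|_] //; by have := ltn_ord a; lia.
Qed.

Lemma ii_conj : ('i : algC) * 'i^* = 1.
Proof. by rewrite conjCi mulrN -expr2 sqrCi opprK. Qed.

Lemma skew_form m (P : 'M[algC]_(m + m)) : unitaryP_mx P -> P *m cj P = (-1)%:M ->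
  exists U : 'M[algC]_(m + m), unitaryP_mx U /\ cj U *m P = Ymx (m + m) *m U.
Proof.
move=> uP hP.
have [E [h1 h2]] := skew_ind uP hP (leqnn m).
set F := 'i *: (cj E *m P).
have JJE : cj E *m P *m ctr (cj E *m P) = 1%:M.
  by rewrite ctrM ctrcj mulmxA -(mulmxA _ P) uP mulmx1 -cjctr -cjM h1 cj1.
exists (col_mx E F); split.
  rewrite /unitaryP_mx ctr_col mul_col_row h1 /F ctrZ -scalemxAr h2 scaler0.
  rewrite -!scalemxAl -scalemxAr scalerA ii_conj scale1r JJE.
  have h3 : cj E *m P *m ctr E = 0 by rewrite -[cj E *m P]ctrK -ctrM h2 ctr0.
  by rewrite h3 scaler0 -scalar_mx_block.
rewrite Ymx_block mul_block_col !mul0mx add0r addr0 !mul_scalar_mx.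
rewrite cj_col mul_col_mx /F cjZ -scalemxAl cjM cjK -mulmxA (cPPn hP).
rewrite mul_mx_scalar scaleN1r scalerN -scaleNr scalerA mulNr -expr2 sqrCi.
by rewrite opprK scale1r conjCi ?opprK ?scaleNr ?opprK.
Qed.

Lemma scNmx k (a : algC) : (- a)%:M = - a%:M :> 'M_k.
Proof. by apply/matrixP => i j; rewrite !mxE mulNrn. Qed.

Section Ylemmas.
Variable m : nat.
Local Notation Y := (Ymx (m + m) : 'M[algC]_(m + m)).

Lemma Ymx_cj : cj Y = - Y.
Proof.
rewrite Ymx_block cjE map_block_mx -!cjE !cj_scalar cj0 rmorphN /= !conjCi.
by rewrite opp_block_mx oppr0 !scNmx ?opprK.
Qed.

Lemma Ymx_ctr : ctr Y = Y.
Proof.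
rewrite ctrE Ymx_cj linearN /= Ymx_block tr_block_mx !trmx0 !tr_scalar_mx.
by rewrite opp_block_mx oppr0 !scNmx opprK.
Qed.

Lemma Ymx_sq : Y *m Y = 1%:M.
Proof.
rewrite Ymx_block mulmx_block !mul0mx !mulmx0 !add0r !addr0.
rewrite -!scalar_mxM mulNr -expr2 sqrCi opprK mulrN -expr2 sqrCi opprK.
by rewrite -scalar_mx_block.
Qed.

Lemma Ymx_unitary : unitaryP_mx Y.
Proof. by rewrite /unitaryP_mx Ymx_ctr Ymx_sq. Qed.
End Ylemmas.

Lemma even_skew d (P : 'M[algC]_d) : P *m cj P = (-1)%:M -> ~~ odd d.
Proof.
move=> hP; apply/negP => od.
have := congr1 determinant hP.
rewrite det_mulmx cjE det_map_mx det_scalar -signr_odd od /= expr1.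
move=> e.
have : 0 <= \det P * (\det P)^* by rewrite mul_conjC_ge0.
by rewrite e ler0N1.
Qed.

Lemma even_half d : ~~ odd d -> d = (d./2 + d./2)%N.
Proof. by move=> od; rewrite addnn -{1}(odd_double_half d) (negbTE od) add0n. Qed.

Lemma skew_result d (P : 'M[algC]_d) : ~~ odd d -> unitaryP_mx P -> P *m cj P = (-1)%:M ->
  exists U : 'M[algC]_d, unitaryP_mx U /\ cj U *m P = Ymx d *m U.
Proof.
move=> /even_half e; move: P; rewrite e => P uP hP.
exact: skew_form uP hP.
Qed.

Lemma Y_facts d : ~~ odd d ->
  [/\ ctr (Ymx d) = Ymx d, Ymx d *m Ymx d = 1%:M & cj (Ymx d) = - Ymx d].
Proof.
move=> /even_half e; rewrite e.
by split; [exact: Ymx_ctr | exact: Ymx_sq | exact: Ymx_cj].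
Qed.

Lemma UTcjU d (U : 'M[algC]_d) : unitaryP_mx U -> U^T *m cj U = 1%:M.
Proof. by move=> uU; rewrite -cjctr -cjM unitary_sym // cj1. Qed.

Lemma back_basis d (U M : 'M[algC]_d) : unitaryP_mx U ->
  U^T *m (cj U *m M *m U^T) *m cj U = M.
Proof.
move=> uU; have h := UTcjU uU; have h' := mulmx1C h.
by rewrite !mulmxA h mul1mx -mulmxA h mulmx1.
Qed.


Lemma memL (x : algC) : x = 0 \/ x = 1 \/ x = -1 -> x \in [:: 0; 1; -1].
Proof. by case=> [->|[->|->]]; rewrite !in_cons eqxx ?orbT. Qed.

Section Main.
Variables (gT : finGroupType) (t : gT -> gT) (w : gT -> gT -> algC)
    (d : nat) (D : gT -> 'M[algC]_d).
Hypothesis ht : involutive_aut t.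
Hypothesis hw : normalized_U1_cocycle w.
Hypothesis hwt : forall g h, w g h * w (t g) (t h) = 1.
Hypothesis hD : irr_proj_unitary_rep w D.

Let S := star_rep t D.

Lemma tmul g h : t (g * h)%g = (t g * t h)%g. Proof. by case: ht. Qed.
Lemma tinv g : t (t g) = g. Proof. by case: ht. Qed.
Lemma Dmul g h : D g *m D h = w g h *: D (g * h)%g. Proof. by case: hD => [[]]. Qed.
Lemma Dun g : unitaryP_mx (D g). Proof. by case: hD => [[]]. Qed.
Lemma Dirr : irreducible_rep D. Proof. by case: hD. Qed.
Lemma d_gt0 : (0 < d)%N. Proof. by case: Dirr. Qed.
Lemma dn0 : (d%:R : algC) != 0. Proof. by rewrite pnatr_eq0 -lt0n d_gt0. Qed.
Lemma Gn0 : (#|gT|%:R : algC) != 0.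
Proof. by rewrite pnatr_eq0 -lt0n; apply/card_gt0P; exists 1%g. Qed.

Lemma conj_wt g h : (w (t g) (t h))^* = w g h.
Proof.
have [n1 _ _ _] := hw.
have h1 : w (t g) (t h) * (w (t g) (t h))^* = 1 by rewrite -normCK n1 expr1n.
by rewrite -[LHS]mul1r -(hwt g h) -mulrA h1 mulr1.
Qed.

Lemma Smul g h : S g *m S h = w g h *: S (g * h)%g.
Proof.
rewrite /S /star_rep -cjM Dmul cjZ conj_wt tmul //.
Qed.

Lemma S_irr : irr_proj_unitary_rep w S.
Proof.
split; first by split; [exact: Smul | move=> g; apply: unitary_cj; exact: Dun].
split; first exact: d_gt0.
move=> U hU.
have hU' : forall h, (cj U *m (D h)^T <= cj U)%MS.
  move=> h; have := hU (t h); rewrite /S /star_rep tinv.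
  rewrite -(map_submx conjC) -!cjE cjM cjtr cjK //.
case: (Dirr) => _ /(_ _ hU') [/eqP|].
  by rewrite cjE map_mx_eq0 => /eqP; left.
by rewrite /row_full cjE mxrank_map; right.
Qed.

Lemma iota_conj : (#|gT|%:R * iota_ind t w D)^* = \sum_(g : gT) \tr (S g *m cj (D g)).
Proof.
rewrite /iota_ind mulrA mulfV ?Gn0 // mul1r rmorph_sum; apply: eq_bigr => g _.
rewrite /proj_character -mxtraceZ -Dmul -trace_map_mx -cjE cjM //.
Qed.

Lemma nonequiv_sum : ~ equiv_rep D S -> \sum_(g : gT) \tr (S g *m cj (D g)) = 0.
Proof.
move=> ne.
have [[hSm _] _] := S_irr.
have T0 X : Tsum S D X = 0.
  case: (intertw Dirr (S := S) (T := Tsum S D X)) => //.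
    by move=> h; apply: (Tsum_intertw hSm (proj1 hD)).
  move=> uT; exfalso; apply: ne; exists (Tsum S D X); split => // g.
  by rewrite -(Tsum_intertw hSm (proj1 hD)) -mulmxA mulmxV // mulmx1.
rewrite (tr_sum (R := 0) (Q := 0)).
  by rewrite big1 // => i _; rewrite big1 // => j _; rewrite mxE mul0r.
by move=> X; rewrite T0 scaler0.
Qed.

Lemma unitary_sum (P : 'M[algC]_d) : unitaryP_mx P ->
  (forall g, S g = P *m D g *m ctr P) ->
  \sum_(g : gT) \tr (S g *m cj (D g)) = #|gT|%:R / d%:R * \tr (P *m cj P).
Proof.
move=> uP hS.
rewrite (tr_sum (R := (#|gT|%:R / d%:R) *: ctr P) (Q := P)).
  rewrite /mxtrace mulr_sumr; apply: eq_bigr => i _.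
  rewrite mxE mulr_sumr; apply: eq_bigr => j _.
  by rewrite !mxE (mulrC (P i j)) mulrA.
move=> X.
have -> : Tsum S D X = P *m Tsum D D (ctr P *m X).
  rewrite /Tsum mulmx_sumr; apply: eq_bigr => g _.
  by rewrite hS !mulmxA.
rewrite (orth_self hD) mul_mx_scalar -scalemxAl mxtraceZ.
by rewrite mulrC.
Qed.

Lemma Sun g : unitaryP_mx (S g). Proof. by have [[_ hu] _] := S_irr; apply: hu. Qed.

Lemma one_neq0 : (1%:M : 'M[algC]_d) != 0.
Proof.
apply/eqP => /matrixP /(_ (Ordinal d_gt0) (Ordinal d_gt0)); rewrite !mxE eqxx /=.
by move/eqP; rewrite oner_eq0.
Qed.

Lemma real_conj_inv (s : algC) : 0 <= s -> (s^-1)^* = s^-1.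
Proof. by move=> s0; apply: conj_Creal; apply: ger0_real; rewrite invr_ge0. Qed.

Lemma equiv_unitary : equiv_rep D S ->
  exists P, unitaryP_mx P /\ forall g, S g = P *m D g *m ctr P.
Proof.
case=> P [uP hS].
set Pi := invmx P.
have PPi : P *m Pi = 1%:M by rewrite mulmxV.
have PiP : Pi *m P = 1%:M by rewrite mulVmx.
have cPi : ctr P *m ctr Pi = 1%:M by rewrite -ctrM PiP ctr1.
have cPi' : ctr Pi *m ctr P = 1%:M by rewrite -ctrM PPi ctr1.
set N := Pi *m ctr Pi.
have comm h : N *m D h = D h *m N.
  have e1 : D h *m N *m ctr (D h) = N.
    have e := Sun h; rewrite /unitaryP_mx in e.
    have := congr1 (fun M => Pi *m M *m ctr Pi) e.
    rewrite hS !ctrM !mulmxA PiP mul1mx mulmx1.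
    by rewrite -!mulmxA cPi mulmx1 !mulmxA.
  by rewrite -{1}e1 -(mulmxA _ (ctr (D h))) unitary_sym ?mulmx1 //; exact: Dun.
have [a ha] := schur_scalar Dirr comm.
have eb : a *: (P *m ctr P) = 1%:M.
  have := congr1 (fun M => P *m M *m ctr P) ha.
  rewrite /N !mulmxA PPi mul1mx -mulmxA cPi' => ->.
  by rewrite mul_scalar_mx scalemxAr.
have a0 : a != 0.
  apply/eqP => a0; move: eb; rewrite a0 scale0r => /esym /eqP.
  by rewrite (negbTE one_neq0).
set b := a^-1.
have ePP : P *m ctr P = b%:M.
  by rewrite -[LHS]scale1r -(mulVf a0) -scalerA eb scalemx1.
set i0 := Ordinal d_gt0.
have b0 : 0 <= b.
  have := congr1 (fun M : 'M[algC]_d => M i0 i0) ePP; rewrite /= !mxE eqxx mulr1n => <-.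
  by apply: sumr_ge0 => k _; rewrite !mxE mul_conjC_ge0.
have bn0 : b != 0 by rewrite invr_eq0.
set s := sqrtC b.
have s0 : 0 <= s by rewrite sqrtC_ge0.
have sn0 : s != 0 by rewrite sqrtC_eq0.
have ss : s^-1 * s^-1 = b^-1 by rewrite -invfM -expr2 sqrtCK.
have Pinv : Pi = b^-1 *: ctr P.
  have e : P *m (b^-1 *: ctr P) = 1%:M.
    by rewrite -scalemxAr ePP scale_scalar_mx mulVf.
  by rewrite -[Pi]mulmx1 -e mulmxA PiP mul1mx.
exists (s^-1 *: P); split.
  by rewrite /unitaryP_mx ctrZ real_conj_inv // -scalemxAl -scalemxAr scalerA ss ePP scale_scalar_mx mulVf.
move=> g; rewrite hS ctrZ real_conj_inv // -scalemxAl -scalemxAl -scalemxAr scalerA ss.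
by rewrite -/Pi Pinv -scalemxAr.
Qed.

Lemma unitary_neq0 (P : 'M[algC]_d) : unitaryP_mx P -> P != 0.
Proof.
move=> uP; apply/eqP => P0; move: uP; rewrite /unitaryP_mx P0 mul0mx => /esym /eqP.
by rewrite (negbTE one_neq0).
Qed.

Lemma c_sign (P : 'M[algC]_d) : unitaryP_mx P ->
  (forall g, S g = P *m D g *m ctr P) ->
  exists c, (c = 1 \/ c = -1) /\ P *m cj P = c%:M.
Proof.
move=> uP hS.
set M := cj P *m P.
have MM : M *m (ctr P *m P^T) = 1%:M.
  by rewrite /M -!mulmxA (mulmxA P) uP mul1mx -cjctr -cjM uP cj1.
have MM' := mulmx1C MM.
have hDg g : D g = M *m D g *m (ctr P *m P^T).
  have e : cj (D g) = P *m D (t g) *m ctr P by have := hS (t g); rewrite /S /star_rep tinv.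
  rewrite -[LHS]cjK e !cjM cjctr.
  have -> : cj (D (t g)) = S g by [].
  by rewrite hS /M !mulmxA.
have comm h : M *m D h = D h *m M.
  by rewrite {2}(hDg h) -(mulmxA _ (ctr P *m P^T)) MM' mulmx1.
have [c hc] := schur_scalar Dirr comm.
have PT1 : P^T *m cj P = 1%:M.
  by rewrite -cjctr -cjM unitary_sym // cj1.
have eP : P = c *: P^T.
  have e1 : P^T *m M = P by rewrite /M mulmxA PT1 mul1mx.
  by rewrite -{1}e1 hc mul_mx_scalar.
have eP2 : (c ^+ 2 - 1) *: P = 0.
  rewrite scalerBl scale1r expr2 -scalerA {2}eP.
  have -> : P^T = c *: P by rewrite {1}eP linearZ /= trmxK.
  by rewrite subrr.
have c2 : c ^+ 2 = 1.
  move/eqP: eP2; rewrite scaler_eq0 (negbTE (unitary_neq0 uP)) orbF subr_eq0.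
  by move/eqP.
have cc : c = 1 \/ c = -1 by move/eqP: c2; rewrite sqrf_eq1 => /orP [] /eqP; auto.
exists c; split => //.
have -> : P *m cj P = cj M by rewrite /M cjM cjK.
rewrite hc cj_scalar; congr (_%:M).
by case: cc => ->; rewrite ?rmorph1 ?rmorphN1.
Qed.

Lemma iota_P (P : 'M[algC]_d) (c : algC) : unitaryP_mx P ->
  (forall g, S g = P *m D g *m ctr P) -> P *m cj P = c%:M -> c^* = c ->
  iota_ind t w D = c.
Proof.
move=> uP hS hc cr.
have := iota_conj; rewrite (unitary_sum uP hS) hc mxtrace_scalar -[c *+ d]mulr_natr.
have e2 : #|gT|%:R / d%:R * (c * d%:R) = #|gT|%:R * c.
  by rewrite mulrCA divfK ?dn0 // mulrC.
rewrite e2 rmorphM /= rmorph_nat => /(mulfI Gn0).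
by move/(congr1 conjC); rewrite conjCK cr.
Qed.


Lemma ctr_tr n (A : 'M[algC]_n) : ctr A^T = cj A.
Proof. by rewrite ctrE cjtr trmxK. Qed.

Lemma noneq_iota : ~ equiv_rep D S -> iota_ind t w D = 0.
Proof.
move=> ne; have := iota_conj; rewrite nonequiv_sum // => /eqP.
by rewrite conjC_eq0 mulf_eq0 (negbTE Gn0) /= => /eqP.
Qed.

Lemma eq_iota : equiv_rep D S -> exists P c, [/\ unitaryP_mx P,
  forall g, S g = P *m D g *m ctr P, c = 1 \/ c = -1, P *m cj P = c%:M & iota_ind t w D = c].
Proof.
move=> /equiv_unitary [P [uP hS]]; have [c [cc hc]] := c_sign uP hS.
exists P, c; split => //; apply: iota_P uP hS hc _.
by case: cc => ->; rewrite ?rmorph1 ?rmorphN1.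
Qed.

Lemma cb_eq U g : cj (change_basis U D (t g)) = cj U *m S g *m U^T.
Proof. by rewrite /change_basis !cjM cjctr. Qed.

Lemma main_sec :
  [/\ irr_proj_unitary_rep w (star_rep t D),
      iota_ind t w D \in [:: 0; 1; -1],
      (iota_ind t w D = 0 <-> ~ equiv_rep D (star_rep t D)),
      (iota_ind t w D = 1 <->
        (exists U : 'M[algC]_d, unitaryP_mx U /\
           (forall g, entry_conj_mx (change_basis U D (t g)) = change_basis U D g))) &
      (iota_ind t w D = -1 <->
        (~~ odd d /\
         exists U : 'M[algC]_d, unitaryP_mx U /\
           (forall g, entry_conj_mx (change_basis U D (t g)) =
                      Ymx d *m change_basis U D g *m Ymx d)))].
Proof.
split.
- exact: S_irr.
- have [eq|ne] := Classical_Prop.classic (equiv_rep D S); last first.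
    by apply: memL; left; exact: noneq_iota ne.
  have [P [c [_ _ cc _ ->]]] := eq_iota eq.
  by apply: memL; case: cc => ->; auto.
- split; last exact: noneq_iota.
  move=> i0 eq; have [P [c [_ _ cc _ ic]]] := eq_iota eq.
  move: ic; rewrite i0; case: cc => -> /eqP.
    by rewrite eq_sym oner_eq0.
  by rewrite eq_sym oppr_eq0 oner_eq0.
- split.
  + move=> i1; have [eq|ne] := Classical_Prop.classic (equiv_rep D S); last first.
      by move: i1; rewrite noneq_iota // => /eqP; rewrite eq_sym oner_eq0.
    have [P [c [uP hS cc hc ic]]] := eq_iota eq.
    rewrite i1 in ic; rewrite -ic in hc.
    have [U [uU hU]] := takagi uP hc.
    exists U; split => // g; rewrite cb_eq hS /change_basis.
    have eU : ctr P *m U^T = ctr U by rewrite -ctrcj -ctrM hU.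
    by rewrite !mulmxA hU -(mulmxA _ (ctr P)) eU.
  + move=> [U [uU hU]].
    set P := U^T *m U.
    have uP : unitaryP_mx P := unitary_mul (unitary_tr uU) uU.
    have hS g : S g = P *m D g *m ctr P.
      have e := hU g; rewrite cb_eq /change_basis in e.
      by rewrite -(back_basis (S g) uU) e /P ctrM ctr_tr !mulmxA.
    have hc : P *m cj P = 1%:M.
      by rewrite /P cjM cjtr -ctrE !mulmxA -(mulmxA _ U) uU mulmx1 UTcjU.
    exact: iota_P uP hS hc (rmorph1 _).
- split.
  + move=> im1; have [eq|ne] := Classical_Prop.classic (equiv_rep D S); last first.
      move: im1; rewrite noneq_iota // => /eqP; rewrite eq_sym oppr_eq0 oner_eq0 //.
    have [P [c [uP hS cc hc ic]]] := eq_iota eq.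
    rewrite im1 in ic; rewrite -ic in hc.
    have od := even_skew hc; have [Y1 Y2 Y3] := Y_facts od.
    have [U [uU hU]] := skew_result od uP hc.
    split => //; exists U; split => // g.
    rewrite cb_eq hS /change_basis.
    have eU : ctr P *m U^T = ctr U *m Ymx d by rewrite -ctrcj -ctrM hU ctrM Y1.
    by rewrite !mulmxA hU -(mulmxA _ (ctr P)) eU !mulmxA.
  + move=> [od [U [uU hU]]].
    have [Y1 Y2 Y3] := Y_facts od.
    have uY : unitaryP_mx (Ymx d) by rewrite /unitaryP_mx Y1 Y2.
    set P := U^T *m Ymx d *m U.
    have uP : unitaryP_mx P := unitary_mul (unitary_mul (unitary_tr uU) uY) uU.
    have hS g : S g = P *m D g *m ctr P.
      have e := hU g; rewrite cb_eq /change_basis in e.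
      by rewrite -(back_basis (S g) uU) e /P !ctrM ctr_tr Y1 !mulmxA.
    have hc : P *m cj P = (-1)%:M.
      rewrite /P !cjM cjtr -ctrE Y3 !mulmxA -(mulmxA _ U) uU mulmx1.
      by rewrite mulmxN mulNmx -(mulmxA U^T (Ymx d) (Ymx d)) Y2 mulmx1 UTcjU // scNmx.
    exact: iota_P uP hS hc (rmorphN1 _).
Qed.
End Main.

Unset Implicit Arguments.

Theorem mainTheorem5 (gT : finGroupType) (t : gT -> gT) (w : gT -> gT -> algC)
    (d : nat) (D : gT -> 'M[algC]_d) :
  involutive_aut t ->
  normalized_U1_cocycle w ->
  (forall g h, w g h * w (t g) (t h) = 1) ->
  irr_proj_unitary_rep w D ->
  [/\ irr_proj_unitary_rep w (star_rep t D),
      iota_ind t w D \in [:: 0; 1; -1],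
      (iota_ind t w D = 0 <-> ~ equiv_rep D (star_rep t D)),
      (iota_ind t w D = 1 <->
        (exists U : 'M[algC]_d, unitaryP_mx U /\
           (forall g, entry_conj_mx (change_basis U D (t g)) = change_basis U D g))) &
      (iota_ind t w D = -1 <->
        (~~ odd d /\
         exists U : 'M[algC]_d, unitaryP_mx U /\
           (forall g, entry_conj_mx (change_basis U D (t g)) =
                      Ymx d *m change_basis U D g *m Ymx d)))].
Proof.
move=> ht hw hwt hD; exact: (@main_sec gT t w d D ht hw hwt hD).
Qed.
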